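(* Let $L$ be a simple Lie algebra over a field $k$ with $|k|>2$, generated by its pure extremal elements, such that there exists a Galois extension $k'/k$ of degree at most $2$ for which the extremal geometry of $L\otimes_k k'$ contains lines, and such that $L$ has symplectic pairs of extremal elements. Let $x,y,c,d\in E$ with $g(x,y)=g(c,d)=1$ such that the pairs $(x,c),(c,y),(y,d),(d,x)$ are symplectic; let $L=\bigoplus_i L_i$ and $L=\bigoplus_i L'_i$ be the $5$-gradings associated with $(x,y)$ and $(c,d)$ respectively, and put $V=L_{-1}\cap L'_{-1}$, $X=L_{-1}\cap L'_0$, $V'=L_{-1}\cap L'_1$, $X'=L_0\cap L'_{-1}$. Then $L_{-1}=V\oplus X\oplus V'$, $L_1=[y,V]\oplus[y,X]\oplus[y,V']$, $L'_{-1}=V\oplus X'\oplus[y,V]$, and $L'_1=V'\oplus[d,X']\oplus[y,V']$.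
   Context: A nonzero $a$ in a Lie algebra $M$ over $F$ is extremal if there is $g_a\colon M\to F$ with $[a,[a,u]]=2g_a(u)a$, $[[a,u],[a,w]]=g_a([u,w])a+g_a(w)[a,u]-g_a(u)[a,w]$, $[a,[u,[a,w]]]=g_a([u,w])a-g_a(w)[a,u]-g_a(u)[a,w]$ for all $u,w$; sandwiches satisfy $[a,[a,u]]=0=[a,[u,[a,w]]]$; pure = non-sandwich; $E$ = set of extremal elements of $L$; $g$ = unique symmetric bilinear form with $g(a,u)=g_a(u)$ for $a\in E$. Pure extremal $a,b$ with $Fa\ne Fb$ are collinear if $[a,b]=0$ and $\lambda a+\mu b$ is extremal or $0$ for all $\lambda,\mu$, symplectic if $[a,b]=0$ and $\lambda a+\mu b$ is extremal or $0$ only when $\lambda\mu=0$; the extremal geometry contains lines iff a collinear pair exists. For $a,b\in E$ with $g(a,b)=1$ the associated $5$-grading is $M_{-2}=ka$, $M_{-1}=[a,U]$, $M_0=\{l:[a,l]\in ka,[b,l]\in kb\}$, $M_1=[b,U]$, $M_2=kb$, $U=\{u:g(u,a)=g(u,b)=g(u,[a,b])=0\}$. *)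

(* Defs.v *)
From HB Require Import structures.
From mathcomp Require Import all_boot all_order all_algebra.
From mathcomp Require Import falgebra fieldext separable galois.
Set Implicit Arguments. Unset Strict Implicit. Unset Printing Implicit Defensive.
Import Order.TTheory GRing.Theory Num.Theory.
Local Open Scope ring_scope.

Section LieDefs.
Variables (F : fieldType) (V : lmodType F) (br : V -> V -> V).

Definition is_lie : Prop :=
  (forall (a : F) u v w, br (a *: u + v) w = a *: br u w + br v w) /\
  (forall (a : F) u v w, br w (a *: u + v) = a *: br w u + br w v) /\
  (forall u, br u u = 0) /\
  (forall u v w, br u (br v w) + br v (br w u) + br w (br u v) = 0).

Definition subspace (S : V -> Prop) : Prop :=
  S 0 /\ forall (a : F) u v, S u -> S v -> S (a *: u + v).

Definition simple_lie : Prop :=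
  (exists u v, br u v <> 0) /\
  forall I : V -> Prop, subspace I -> (forall u v, I v -> I (br u v)) ->
    (forall v, I v -> v = 0) \/ (forall v, I v).

Definition extremal_with (a : V) (ga : V -> F) : Prop :=
  forall u w,
    br a (br a u) = (2%:R * ga u) *: a /\
    br (br a u) (br a w) = ga (br u w) *: a + ga w *: br a u - ga u *: br a w /\
    br a (br u (br a w)) = ga (br u w) *: a - ga w *: br a u - ga u *: br a w.

Definition extremal (a : V) : Prop := a <> 0 /\ exists ga, extremal_with a ga.

Definition sandwich (a : V) : Prop :=
  forall u w, br a (br a u) = 0 /\ br a (br u (br a w)) = 0.

Definition pure_extremal (a : V) : Prop := extremal a /\ ~ sandwich a.

Definition distinct_points (a b : V) : Prop :=
  (forall t : F, b <> t *: a) /\ (forall t : F, a <> t *: b).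

Definition collinear (a b : V) : Prop :=
  pure_extremal a /\ pure_extremal b /\ distinct_points a b /\ br a b = 0 /\
  forall l m : F, extremal (l *: a + m *: b) \/ l *: a + m *: b = 0.

Definition symplectic (a b : V) : Prop :=
  pure_extremal a /\ pure_extremal b /\ distinct_points a b /\ br a b = 0 /\
  forall l m : F, (extremal (l *: a + m *: b) \/ l *: a + m *: b = 0) -> l * m = 0.

Definition has_lines : Prop := exists a b, collinear a b.

Definition generated_by_pure_extremal : Prop :=
  forall S : V -> Prop, subspace S -> (forall u v, S u -> S v -> S (br u v)) ->
    (forall a, pure_extremal a -> S a) -> forall u, S u.

Definition extremal_form (g : V -> V -> F) : Prop :=
  (forall u v, g u v = g v u) /\
  (forall (a : F) u v w, g (a *: u + v) w = a * g u w + g v w) /\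
  (forall a, extremal a -> extremal_with a (g a)).

(* 5-grading associated with (a, b), g(a,b) = 1 *)
Definition grU (g : V -> V -> F) (a b : V) (u : V) : Prop :=
  g u a = 0 /\ g u b = 0 /\ g u (br a b) = 0.
Definition grade_m1 g (a b : V) (l : V) : Prop := exists u, grU g a b u /\ l = br a u.
Definition grade_0 (a b : V) (l : V) : Prop :=
  (exists t : F, br a l = t *: a) /\ (exists t : F, br b l = t *: b).
Definition grade_1 g (a b : V) (l : V) : Prop := exists u, grU g a b u /\ l = br b u.

Definition ad_image (y : V) (P : V -> Prop) (l : V) : Prop := exists v, P v /\ l = br y v.

End LieDefs.

Definition inter {T} (A B : T -> Prop) (x : T) : Prop := A x /\ B x.

Definition dsum3 (F : fieldType) (V : lmodType F) (A B C D : V -> Prop) : Prop :=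
  (forall l, A l <-> exists b c d, B b /\ C c /\ D d /\ l = b + c + d) /\
  (forall b c d, B b -> C c -> D d -> b + c + d = 0 -> b = 0 /\ c = 0 /\ d = 0).

(* (M, brM, iota) is the base change L (x)_k k' : iota is k-linear, a Lie
   homomorphism, and the k'-linear extension L (x)_k k' -> M is bijective,
   i.e. with a k-basis (e_i) of k', every m in M is uniquely sum_i e_i iota(u_i). *)
Definition is_base_change (k : fieldType) (k' : fieldExtType k)
  (L : lmodType k) (M : lmodType k') (brL : L -> L -> L) (brM : M -> M -> M)
  (iota : L -> M) : Prop :=
  (forall (a : k) u v, iota (a *: u + v) = a%:A *: iota u + iota v) /\
  (forall u v, iota (brL u v) = brM (iota u) (iota v)) /\
  (forall m : M, exists u : 'I_(\dim (@fullv _ k')) -> L,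
     m = \sum_i tnth (vbasis fullv) i *: iota (u i) /\
     forall u' : 'I_(\dim (@fullv _ k')) -> L,
       m = \sum_i tnth (vbasis fullv) i *: iota (u' i) -> forall i, u' i = u i).

(* Main.v *)
Require Import Defs.
From HB Require Import structures.
From mathcomp Require Import all_boot all_order all_algebra.
From mathcomp Require Import falgebra fieldext separable galois.
From mathcomp Require Import ring.
Set Implicit Arguments. Unset Strict Implicit. Unset Printing Implicit Defensive.
Import Order.TTheory GRing.Theory Num.Theory.
Local Open Scope ring_scope.

Section LinExp.
Variables (k : fieldType) (L : lmodType k).
Inductive lexp := LAt of nat | LZ | LAdd of lexp & lexp | LOpp of lexp | LSc of k & lexp.
Fixpoint leval (env : seq L) e : L :=
  match e with
  | LAt i => nth 0 env i | LZ => 0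
  | LAdd e1 e2 => leval env e1 + leval env e2
  | LOpp e => - leval env e | LSc s e => s *: leval env e end.
Fixpoint lcoef e (j : nat) : k :=
  match e with
  | LAt i => if i == j then 1 else 0 | LZ => 0
  | LAdd e1 e2 => lcoef e1 j + lcoef e2 j
  | LOpp e => - lcoef e j | LSc s e => s * lcoef e j end.
Lemma leval_coef env e : leval env e = \sum_(j < size env) lcoef e j *: nth 0 env j.
Proof.
elim: e => /=.
- move=> i; case: (ltnP i (size env)) => hi.
    rewrite (bigD1 (Ordinal hi)) //= eqxx scale1r big1 ?addr0 // => j /eqP nj.
    case: eqP => [ej|]; last by rewrite scale0r.
    by case: nj; apply: val_inj; rewrite /= ej.
  rewrite nth_default // big1 // => j _; case: eqP => [ej|]; last by rewrite scale0r.
  by move: (ltn_ord j); rewrite -ej ltnNge hi.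
- by rewrite big1 // => j _; rewrite scale0r.
- by move=> e1 -> e2 ->; rewrite -big_split; apply: eq_bigr => j _; rewrite scalerDl.
- by move=> e ->; rewrite -sumrN; apply: eq_bigr => j _; rewrite scaleNr.
- by move=> s e ->; rewrite scaler_sumr; apply: eq_bigr => j _; rewrite scalerA.
Qed.
Fixpoint allcoef (n : nat) e1 e2 : Prop :=
  match n with 0 => True | n.+1 => allcoef n e1 e2 /\ lcoef e1 n = lcoef e2 n end.
Lemma lin_eq env e1 e2 : allcoef (size env) e1 e2 -> leval env e1 = leval env e2.
Proof.
move=> H; rewrite !leval_coef; apply: eq_bigr => j _.
suff H' : forall m, (m < size env)%N -> lcoef e1 m = lcoef e2 m by rewrite H'.
elim: (size env) H => // n IH /= [H1 H2] m; rewrite ltnS leq_eqVlt => /orP [/eqP->|] //.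
exact: IH.
Qed.
End LinExp.

Ltac lin_len l := match l with
  | nil => constr:(0%N) | cons _ ?r => let n := lin_len r in constr:(S n) end.
Ltac lin_lookup t l := match l with
  | cons t _ => constr:(0%N)
  | cons _ ?r => let n := lin_lookup t r in constr:(S n) end.
Ltac lin_app l t := match l with
  | nil => constr:(cons t nil) | cons ?h ?r => let r' := lin_app r t in constr:(cons h r') end.

Ltac lin_reify K env t :=
  match t with
  | @GRing.zero _ => constr:((@LZ K, env))
  | @GRing.add _ ?a ?b =>
      let r1 := lin_reify K env a in
      match r1 with (?e1, ?env1) =>
      let r2 := lin_reify K env1 b in
      match r2 with (?e2, ?env2) => constr:((LAdd e1 e2, env2)) end end
  | @GRing.opp _ ?a =>
      let r1 := lin_reify K env a in
      match r1 with (?e1, ?env1) => constr:((LOpp e1, env1)) end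
  | @GRing.scale _ _ ?s ?a =>
      let r1 := lin_reify K env a in
      match r1 with (?e1, ?env1) => constr:((LSc s e1, env1)) end
  | _ => let n := lin_lookup t env in constr:((@LAt K n, env))
  | _ => let n := lin_len env in let env' := lin_app env t in constr:((@LAt K n, env'))
  end.

Ltac lin K :=
  match goal with |- ?lhs = ?rhs =>
  let V := type of lhs in
  let r1 := lin_reify K (@nil V) lhs in
  match r1 with (?e1, ?env1) =>
  let r2 := lin_reify K env1 rhs in
  match r2 with (?e2, ?env2) =>
    change (leval env2 e1 = leval env2 e2); apply: lin_eq; simpl;
    repeat split; ring
  end end end.

Section Lie.
Variables (k : fieldType) (L : lmodType k) (br : L -> L -> L) (g : L -> L -> k).
Hypothesis Hlie : is_lie br.
Hypothesis Hg : extremal_form br g.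

Lemma brDl u v w : br (u + v) w = br u w + br v w.
Proof. have [H _] := Hlie. have := H 1 u v w. by rewrite !scale1r. Qed.
Lemma brDr u v w : br w (u + v) = br w u + br w v.
Proof. have [_ [H _]] := Hlie. have := H 1 u v w. by rewrite !scale1r. Qed.
Lemma br0l w : br 0 w = 0.
Proof. by apply: (addrI (br 0 w)); rewrite addr0 -brDl addr0. Qed.
Lemma br0r w : br w 0 = 0.
Proof. by apply: (addrI (br w 0)); rewrite addr0 -brDr addr0. Qed.
Lemma brZl a u w : br (a *: u) w = a *: br u w.
Proof. by have [H _] := Hlie; rewrite -[a *: u]addr0 H br0l addr0. Qed.
Lemma brZr a u w : br w (a *: u) = a *: br w u.
Proof. by have [_ [H _]] := Hlie; rewrite -[a *: u]addr0 H br0r addr0. Qed.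
Lemma brNl u w : br (- u) w = - br u w.
Proof. by rewrite -scaleN1r brZl scaleN1r. Qed.
Lemma brNr u w : br w (- u) = - br w u.
Proof. by rewrite -scaleN1r brZr scaleN1r. Qed.
Lemma brBl u v w : br (u - v) w = br u w - br v w.
Proof. by rewrite brDl brNl. Qed.
Lemma brBr u v w : br w (u - v) = br w u - br w v.
Proof. by rewrite brDr brNr. Qed.
Lemma brxx u : br u u = 0.
Proof. by have [_ [_ [H _]]] := Hlie. Qed.
Lemma brC u v : br u v = - br v u.
Proof.
have := brxx (u + v); rewrite brDl !brDr !brxx add0r addr0 => /eqP.
by rewrite addr_eq0 => /eqP.
Qed.
Lemma jac u v w : br u (br v w) = br (br u v) w + br v (br u w).
Proof.
have [_ [_ [_ H]]] := Hlie.
rewrite [br (br u v) w]brC [br u w]brC brNr -opprD.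
by apply/eqP; rewrite -addr_eq0 [br w _ + _]addrC addrA H.
Qed.

Lemma gC u v : g u v = g v u.
Proof. by case: Hg. Qed.
Lemma gDl u v w : g (u + v) w = g u w + g v w.
Proof. by case: Hg => _ [H _]; have := H 1 u v w; rewrite scale1r mul1r. Qed.
Lemma g0l w : g 0 w = 0.
Proof. by apply: (addrI (g 0 w)); rewrite addr0 -gDl addr0. Qed.
Lemma gZl a u w : g (a *: u) w = a * g u w.
Proof. by case: Hg => _ [H _]; have := H a u 0 w; rewrite addr0 g0l addr0. Qed.
Lemma gNl u w : g (- u) w = - g u w.
Proof. by rewrite -scaleN1r gZl mulN1r. Qed.
Lemma gBl u v w : g (u - v) w = g u w - g v w.
Proof. by rewrite gDl gNl. Qed.
Lemma gDr u v w : g w (u + v) = g w u + g w v.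
Proof. by rewrite gC gDl !(gC w). Qed.
Lemma g0r w : g w 0 = 0.
Proof. by rewrite gC g0l. Qed.
Lemma gZr a u w : g w (a *: u) = a * g w u.
Proof. by rewrite gC gZl gC. Qed.
Lemma gNr u w : g w (- u) = - g w u.
Proof. by rewrite gC gNl gC. Qed.
Lemma gBr u v w : g w (u - v) = g w u - g w v.
Proof. by rewrite gDr gNr. Qed.

Lemma ext_g a : extremal br a -> extremal_with br a (g a).
Proof. by case: Hg => _ [_ H]; apply: H. Qed.

Lemma pure_ext a : pure_extremal br a -> extremal br a.
Proof. by case. Qed.

Lemma sandwich_of_line a : (forall w, exists t, br a w = t *: a) -> sandwich br a.
Proof.
move=> H u w; split.
  by case: (H u) => t ->; rewrite brZr brxx scaler0.
case: (H w) => t ->; case: (H u) => s Hu.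
by rewrite !brZr [br u a]brC Hu brNr brZr brxx scaler0 oppr0 scaler0.
Qed.

Lemma comm_g0 a b : pure_extremal br a -> br a b = 0 ->
  g a b = 0 /\ forall w, g a (br b w) = 0.
Proof.
move=> [[a0 Ea] ns] ab.
have E := ext_g (conj a0 Ea).
have key : forall w, g a (br b w) *: a = g a b *: br a w.
  move=> w; have [_ [H2 _]] := E b w.
  move: H2; rewrite ab br0l scaler0 addr0 => /eqP.
  by rewrite eq_sym subr_eq0 => /eqP.
have a0' : a != 0 by apply/eqP.
have gab : g a b = 0.
  apply/eqP/negPn/negP => nz; apply: ns; apply: sandwich_of_line => w.
  exists ((g a b)^-1 * g a (br b w)).
  by rewrite -scalerA key scalerA mulVf // scale1r.
split => // w; have := key w; rewrite gab scale0r => /eqP.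
by rewrite scaler_eq0 (negbTE a0') orbF => /eqP.
Qed.

Definition ex (a : L) (ga : L -> k) (u : L) := u + br a u + ga u *: a.

Lemma ex_hom a ga : extremal_with br a ga ->
  forall u w, ex a ga (br u w) = br (ex a ga u) (ex a ga w).
Proof.
move=> E u w; rewrite /ex.
have [E1u [E2 _]] := E u w. have [E1w _] := E w u.
rewrite !brDl !brDr !brZl !brZr ?brDr ?brZr E1w brxx [br u a]brC.
rewrite [br (br a u) a]brC E1u E2 jac.
lin k.
Qed.

Lemma ext_scale a ga t : extremal_with br a ga ->
  extremal_with br (t *: a) (fun u => t * ga u).
Proof.
move=> E u w; have [E1 [E2 E3]] := E u w.
rewrite !brZl !brZr E1 E2 E3; split; [|split]; lin k.
Qed.

Lemma pure_opp a : pure_extremal br a -> pure_extremal br (- a).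
Proof.
move=> [[a0 [ga E]] ns]; split; first split.
- by move/eqP; rewrite oppr_eq0 => /eqP.
- by exists (fun u => -1 * ga u); rewrite -scaleN1r; apply: ext_scale.
- move=> S; apply: ns => u w; have [S1 S2] := S u w.
  by move: S1 S2; rewrite !brNl !brNr !opprK.
Qed.

Lemma ext_uniq p g1 g2 : pure_extremal br p -> extremal_with br p g1 ->
  extremal_with br p g2 -> forall u, g1 u = g2 u.
Proof.
move=> [[p0 _] ns] E1 E2 u0; apply/eqP/negPn/negP => ne.
have p0' : p != 0 by apply/eqP.
have d0 : g1 u0 - g2 u0 != 0 by rewrite subr_eq0.
have two0 : (2%:R : k) = 0.
  have [A _] := E1 u0 u0; have [B _] := E2 u0 u0.
  move: A; rewrite B => /eqP; rewrite eq_sym -subr_eq0 -scalerBl scaler_eq0 (negbTE p0') orbF.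
  rewrite -mulrBr mulf_eq0 (negbTE d0) orbF => /eqP //.
have line : forall w, exists al be, br p w = al *: p + be *: br p u0.
  move=> w; have [_ [A _]] := E1 u0 w; have [_ [B _]] := E2 u0 w.
  exists ((g1 u0 - g2 u0)^-1 * (g1 (br u0 w) - g2 (br u0 w))).
  exists ((g1 u0 - g2 u0)^-1 * (g1 w - g2 w)).
  have : (g1 u0 - g2 u0) *: br p w =
         (g1 (br u0 w) - g2 (br u0 w)) *: p + (g1 w - g2 w) *: br p u0.
    have H : g1 (br u0 w) *: p + g1 w *: br p u0 - g1 u0 *: br p w =
             g2 (br u0 w) *: p + g2 w *: br p u0 - g2 u0 *: br p w by rewrite -A -B.
    apply/eqP; rewrite -subr_eq0; apply/eqP.
    have -> : 0 = (g2 (br u0 w) *: p + g2 w *: br p u0 - g2 u0 *: br p w) -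
              (g1 (br u0 w) *: p + g1 w *: br p u0 - g1 u0 *: br p w) by rewrite H subrr.
    lin k.
  move=> H; rewrite -!scalerA -scalerDr -H scalerA mulVf // scale1r //.
have pv : br p (br p u0) = 0 by have [A _] := E1 u0 u0; rewrite A two0 mul0r scale0r.
apply: ns => u w; split.
  by have [A _] := E1 u w; rewrite A two0 mul0r scale0r.
have [A _] := E1 w w.
rewrite jac A two0 mul0r scale0r br0r addr0.
have [a1 [b1 ->]] := line u; have [a2 [b2 ->]] := line w.
rewrite !brDl !brDr !brZl !brZr brxx pv [br (br p u0) p]brC pv brxx.
lin k.
Qed.

Definition E a u := ex a (g a) u.

Lemma E_hom a u w : pure_extremal br a -> E a (br u w) = br (E a u) (E a w).
Proof. by move=> Pa; apply: ex_hom; apply: ext_g; case: Pa. Qed.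
Lemma ED a u v : E a (u + v) = E a u + E a v.
Proof. rewrite /E /ex brDr gDr; lin k. Qed.
Lemma EZ a s u : E a (s *: u) = s *: E a u.
Proof. rewrite /E /ex brZr gZr; lin k. Qed.
Lemma EN a u : E a (- u) = - E a u.
Proof. by rewrite -scaleN1r EZ scaleN1r. Qed.
Lemma E0 a : E a 0 = 0.
Proof. by have := EZ a 0 0; rewrite !scale0r. Qed.

Lemma gaa a : pure_extremal br a -> g a a = 0 /\ forall w, g a (br a w) = 0.
Proof. by move=> Pa; apply: comm_g0 => //; apply: brxx. Qed.

Lemma E_inv a u : pure_extremal br a -> E (- a) (E a u) = u.
Proof.
move=> Pa; have [ga0 gaw] := gaa Pa.
have [E1 _] := ext_g (pure_ext Pa) u u.
rewrite /E /ex !brNl gNl !brDr !brZr !gDr !gZr ga0 gaw E1 brxx.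
lin k.
Qed.
Lemma E_inv' a u : pure_extremal br a -> E a (E (- a) u) = u.
Proof. by move=> Pa; have := E_inv u (pure_opp Pa); rewrite opprK. Qed.

Lemma E_ext a b : pure_extremal br a -> pure_extremal br b ->
  extremal_with br (E a b) (fun w => g b (E (- a) w)).
Proof.
move=> Pa Pb u w.
have hu : u = E a (E (- a) u) by rewrite E_inv'.
have hw : w = E a (E (- a) w) by rewrite E_inv'.
rewrite /extremal_with.
set u' := E (- a) u in hu *. set w' := E (- a) w in hw *.
clearbody u' w'; subst u w.
rewrite -!E_hom // !E_inv //.
have [E1 [E2 E3]] := ext_g (pure_ext Pb) u' w'.
rewrite E1 E2 E3 !(ED, EN, EZ); split; [|split]; lin k.
Qed.

Lemma E_pure a b : pure_extremal br a -> pure_extremal br b ->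
  pure_extremal br (E a b).
Proof.
move=> Pa Pb; split; first split.
- move=> H; case: Pb => [[b0 _] _]; apply: b0.
  by rewrite -(E_inv b Pa) H E0.
- by exists (fun w => g b (E (- a) w)); apply: E_ext.
- move=> S; case: Pb => _; apply => u w; split.
    have [S1 _] := S (E a u) w.
    transitivity (E (- a) (br (E a b) (br (E a b) (E a u)))).
      by rewrite -!(@E_hom a _ _ Pa) E_inv.
    by rewrite S1 E0.
  have [_ S2] := S (E a u) (E a w).
  transitivity (E (- a) (br (E a b) (br (E a u) (br (E a b) (E a w))))).
    by rewrite -!(@E_hom a _ _ Pa) E_inv.
  by rewrite S2 E0.
Qed.

Lemma assoc a b w : pure_extremal br a -> pure_extremal br b ->
  g (br a b) w = - g b (br a w).
Proof.
move=> Pa Pb.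
have U := ext_uniq (E_pure Pa Pb) (ext_g (pure_ext (E_pure Pa Pb))) (E_ext Pa Pb) w.
move: U; rewrite /E /ex !gDl !gZl !brNl gNl !gDr !gZr !gNr (gC b a).
move=> /eqP; rewrite -subr_eq0 => /eqP H.
apply/eqP; rewrite -subr_eq0; apply/eqP; rewrite -H; ring.
Qed.

Lemma brcomm a e u : br a e = 0 -> br a (br e u) = br e (br a u).
Proof. by move=> ae; rewrite jac ae br0l add0r. Qed.

Lemma gab_assoc a b u : pure_extremal br a -> pure_extremal br b ->
  g a (br b u) = g u (br a b).
Proof.
move=> Pa Pb; rewrite (gC u) -[g a _]opprK -(assoc u Pb Pa) [br b a]brC gNl opprK //.
Qed.

Lemma grU_swap a b u : grU br g a b u -> grU br g b a u.
Proof. by case=> [h1 [h2 h3]]; split=> //; split=> //; rewrite brC gNr h3 oppr0. Qed.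

Lemma g1_m1 a b l : grade_1 br g a b l -> grade_m1 br g b a l.
Proof. by case=> u [hu ->]; exists u; split=> //; apply: grU_swap. Qed.
Lemma m1_g1 a b l : grade_m1 br g b a l -> grade_1 br g a b l.
Proof. by case=> u [hu ->]; exists u; split=> //; apply: grU_swap. Qed.

Lemma grU_lin a b s u v : grU br g a b u -> grU br g a b v -> grU br g a b (s *: u + v).
Proof.
case=> [h1 [h2 h3]] [i1 [i2 i3]].
by split; [|split]; rewrite gDl gZl ?h1 ?h2 ?h3 ?i1 ?i2 ?i3 mulr0 addr0.
Qed.
Lemma grU0 a b : grU br g a b 0.
Proof. by split; [|split]; rewrite g0l. Qed.

Lemma N0 a b : grade_m1 br g a b 0.
Proof. by exists 0; split; [apply: grU0 | rewrite br0r]. Qed.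
Lemma Nlin a b s u v : grade_m1 br g a b u -> grade_m1 br g a b v ->
  grade_m1 br g a b (s *: u + v).
Proof.
case=> u' [hu ->] [v' [hv ->]]; exists (s *: u' + v'); split; first exact: grU_lin.
by rewrite brDr brZr.
Qed.
Lemma NN a b u : grade_m1 br g a b u -> grade_m1 br g a b (- u).
Proof. by move=> H; rewrite -scaleN1r -[_ *: u]addr0; apply: Nlin => //; apply: N0. Qed.
Lemma ND a b u v : grade_m1 br g a b u -> grade_m1 br g a b v -> grade_m1 br g a b (u + v).
Proof. by move=> H1 H2; rewrite -[u]scale1r; apply: Nlin. Qed.
Lemma NB a b u v : grade_m1 br g a b u -> grade_m1 br g a b v -> grade_m1 br g a b (u - v).
Proof. by move=> H1 H2; apply: ND => //; apply: NN. Qed.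

Lemma Z0 a b : grade_0 br a b 0.
Proof. by split; exists 0; rewrite br0r scale0r. Qed.
Lemma Zlin a b s u v : grade_0 br a b u -> grade_0 br a b v -> grade_0 br a b (s *: u + v).
Proof.
case=> [[t1 h1] [t2 h2]] [[t3 h3] [t4 h4]]; split.
  by exists (s * t1 + t3); rewrite brDr brZr h1 h3 scalerDl scalerA.
by exists (s * t2 + t4); rewrite brDr brZr h2 h4 scalerDl scalerA.
Qed.
Lemma ZN a b u : grade_0 br a b u -> grade_0 br a b (- u).
Proof. by move=> H; rewrite -scaleN1r -[_ *: u]addr0; apply: Zlin => //; apply: Z0. Qed.
Lemma ZD a b u v : grade_0 br a b u -> grade_0 br a b v -> grade_0 br a b (u + v).
Proof. by move=> H1 H2; rewrite -[u]scale1r; apply: Zlin. Qed.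
Lemma ZB a b u v : grade_0 br a b u -> grade_0 br a b v -> grade_0 br a b (u - v).
Proof. by move=> H1 H2; apply: ZD => //; apply: ZN. Qed.

Lemma N_U a b n : pure_extremal br a -> pure_extremal br b ->
  grade_m1 br g a b n -> grU br g a b n.
Proof.
move=> Pa Pb [u [[h1 [h2 h3]] ->]]; have [_ gaw] := gaa Pa.
split; [|split].
- by rewrite gC gaw.
- by rewrite gC gab_assoc // [br b a]brC gNr h3 oppr0.
- have [E1 _] := ext_g (pure_ext Pa) u u.
  by rewrite gC assoc // E1 gZr gC h1 mulr0 mul0r oppr0.
Qed.

Lemma P_U a b p : pure_extremal br a -> pure_extremal br b ->
  grade_1 br g a b p -> grU br g a b p.
Proof. by move=> Pa Pb H; apply: grU_swap; apply: N_U => //; apply: g1_m1. Qed.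

Lemma N_ad a b n : pure_extremal br a -> pure_extremal br b -> g a b = 1 ->
  grade_m1 br g a b n -> br a (br b n) = - n.
Proof.
move=> Pa Pb ab [u [[h1 [h2 h3]] ->]].
have [_ [_ E3]] := ext_g (pure_ext Pa) b u.
rewrite E3 gab_assoc // h3 (gC a u) h1 ab !scale0r scale1r; lin k.
Qed.

Lemma N_kill a b n : pure_extremal br a -> grade_m1 br g a b n -> br a n = 0.
Proof.
move=> Pa [u [[h1 _] ->]]; have [E1 _] := ext_g (pure_ext Pa) u u.
by rewrite E1 gC h1 mulr0 scale0r.
Qed.

Lemma cancel2 (s : k) (h : L) : (2%:R * s) *: h = s *: h -> s *: h = 0.
Proof.
move=> H; have -> : s *: h = (2%:R * s) *: h - s *: h by lin k.
by rewrite H subrr.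
Qed.

Lemma direct a b n z p : pure_extremal br a -> pure_extremal br b -> g a b = 1 ->
  grade_m1 br g a b n -> grade_0 br a b z -> grade_1 br g a b p ->
  n + z + p = 0 -> n = 0 /\ z = 0 /\ p = 0.
Proof.
move=> Pa Pb ab Nn [[t ht] [s hs]] Pp sum.
have Np := g1_m1 Pp.
have ba : g b a = 1 by rewrite gC.
have Ean := N_ad Pa Pb ab Nn. have Ebp := N_ad Pb Pa ba Np.
have Kb := N_kill Pb Np. have Ka := N_kill Pa Nn.
have [E1a _] := ext_g (pure_ext Pa) b b.
have [E1b _] := ext_g (pure_ext Pb) a a.
have n_eq : n = s *: br a b.
  have := congr1 (fun v => br a (br b v)) sum; rewrite /= !brDr Ean hs Kb br0r.
  by rewrite ?br0r brZr ?addr0 => /eqP; rewrite addrC subr_eq0 => /eqP ->.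
have hb : br b (br a b) = - ((2%:R * g b a) *: b).
  by rewrite (brC a b) (brNr (br b a) b) E1b.
have n0 : n = 0.
  rewrite n_eq; apply: cancel2; move: Ean; rewrite n_eq brZr hb ba brZr brNr brZr => H.
  have : - ((2%:R * s) *: br a b) = - (s *: br a b) by rewrite -H; lin k.
  by move/oppr_inj.
move: sum; rewrite n0 add0r => sum.
have p_eq : p = t *: br b a.
  have := congr1 (fun v => br b (br a v)) sum; rewrite /= !brDr Ebp ht br0r brZr.
  by rewrite br0r => /eqP; rewrite subr_eq0 => /eqP <-.
have ha : br a (br b a) = - ((2%:R * g a b) *: a) by rewrite (brC b a) (brNr (br a b) a) E1a.
have p0 : p = 0.
  rewrite p_eq; apply: cancel2; move: Ebp; rewrite p_eq brZr ha ab brZr brNr brZr => H.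
  have : - ((2%:R * t) *: br b a) = - (t *: br b a) by rewrite -H; lin k.
  by move/oppr_inj.
by split=> //; split=> //; move: sum; rewrite p0 addr0.
Qed.

Lemma projN a b e u : pure_extremal br a -> pure_extremal br b ->
  br a e = 0 -> br b e = 0 ->
  grade_m1 br g a b (- br a (br b (br e u))).
Proof.
move=> Pa Pb ae be; exists (- br b (br e u)); split; last by rewrite brNr.
have [_ ca] := comm_g0 Pa ae; have [_ cb] := comm_g0 Pb be; have [_ bb] := gaa Pb.
split; [|split].
- by rewrite gNl gC (brcomm u be) ca oppr0.
- by rewrite gNl gC bb oppr0.
- by rewrite gNl gC assoc // (brcomm u be) (brcomm _ ae) cb !oppr0.
Qed.

Lemma projZ a b l : pure_extremal br a -> pure_extremal br b -> g a b = 1 ->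
  g a l = 0 -> g b l = 0 -> g a (br b l) = 0 -> g b (br a l) = 0 ->
  grade_0 br a b (l + br a (br b l) + br b (br a l)).
Proof.
move=> Pa Pb ab h1 h2 h3 h4.
have ba : g b a = 1 by rewrite gC.
have [E1a _] := ext_g (pure_ext Pa) (br b l) l.
have [_ [_ E3a]] := ext_g (pure_ext Pa) b l.
have [E1b _] := ext_g (pure_ext Pb) (br a l) l.
have [_ [_ E3b]] := ext_g (pure_ext Pb) a l.
split; exists 0; rewrite scale0r !brDr.
  by rewrite E1a E3a h3 h1 ab; lin k.
by rewrite E1b E3b h4 h2 ba; lin k.
Qed.

Lemma Nstab a b e l : pure_extremal br a -> pure_extremal br b ->
  br a e = 0 -> br b e = 0 -> grade_m1 br g a b l -> grade_m1 br g a b (br e l).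
Proof.
move=> Pa Pb ae be [u [_ ->]]; exists (br e u); split; last by rewrite (brcomm u ae).
have [_ ca] := comm_g0 Pa ae; have [_ cb] := comm_g0 Pb be.
split; [|split].
- by rewrite gC ca.
- by rewrite gC cb.
- by rewrite gC assoc // (brcomm u ae) cb oppr0.
Qed.

Lemma Zstab a b e z : br a e = 0 -> br b e = 0 ->
  grade_0 br a b z -> grade_0 br a b (br e z).
Proof.
move=> ae be [[t ht] [s hs]]; split; exists 0; rewrite scale0r.
  by rewrite (brcomm z ae) ht brZr brC ae oppr0 scaler0.
by rewrite (brcomm z be) hs brZr brC be oppr0 scaler0.
Qed.

Lemma N_of_P a b p : pure_extremal br a -> pure_extremal br b ->
  grade_1 br g a b p -> grade_m1 br g a b (br a p).
Proof. by move=> Pa Pb H; exists p; split=> //; apply: P_U. Qed.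

Lemma P_of_N a b n : pure_extremal br a -> pure_extremal br b ->
  grade_m1 br g a b n -> grade_1 br g a b (br b n).
Proof. by move=> Pa Pb H; exists n; split=> //; apply: N_U. Qed.


Lemma claim1 x y c d : pure_extremal br x -> pure_extremal br y ->
  pure_extremal br c -> pure_extremal br d -> g x y = 1 -> g c d = 1 ->
  br x c = 0 -> br c x = 0 -> br y c = 0 -> br c y = 0 ->
  br x d = 0 -> br d x = 0 -> br y d = 0 -> br d y = 0 ->
  dsum3 (grade_m1 br g x y) (inter (grade_m1 br g x y) (grade_m1 br g c d))
    (inter (grade_m1 br g x y) (grade_0 br c d))
    (inter (grade_m1 br g x y) (grade_1 br g c d)).
Proof.
move=> Px Py Pc Pd xy cd xc cx yc cy xd dx yd dy.
split; last first.
  move=> b z p [_ Nb] [_ Zz] [_ Pp] sum; exact: (direct Pc Pd cd Nb Zz Pp sum).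
move=> l; split; last first.
  move=> [b [z [p [[Nb _] [[Nz _] [[Np _] ->]]]]]].
  by apply: ND => //; apply: ND.
move=> Nl; have [u [_ lu]] := Nl.
have [_ gcx] := comm_g0 Pc cx; have [_ gdx] := comm_g0 Pd dx.
exists (- br c (br d l)), (l + br c (br d l) + br d (br c l)), (- br d (br c l)).
split; [split|split; [split|split; [split|]]].
- by apply: NN; apply: Nstab => //; apply: Nstab.
- by rewrite lu; apply: projN.
- by apply: ND; [apply: ND|]; [|apply: Nstab => //; apply: Nstab|apply: Nstab => //; apply: Nstab].
- apply: projZ => //; rewrite lu ?gcx ?gdx //.
    by rewrite (brcomm u dx) gcx.
  by rewrite (brcomm u cx) gdx.
- by apply: NN; apply: Nstab => //; apply: Nstab.
- by apply: m1_g1; rewrite lu; apply: projN.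
- lin k.
Qed.

Lemma claim2 x y c d : pure_extremal br x -> pure_extremal br y ->
  pure_extremal br c -> pure_extremal br d -> g x y = 1 -> g c d = 1 ->
  br x c = 0 -> br c x = 0 -> br y c = 0 -> br c y = 0 ->
  br x d = 0 -> br d x = 0 -> br y d = 0 -> br d y = 0 ->
  dsum3 (grade_1 br g x y)
    (ad_image br y (inter (grade_m1 br g x y) (grade_m1 br g c d)))
    (ad_image br y (inter (grade_m1 br g x y) (grade_0 br c d)))
    (ad_image br y (inter (grade_m1 br g x y) (grade_1 br g c d))).
Proof.
move=> Px Py Pc Pd xy cd xc cx yc cy xd dx yd dy.
have [C1 C1u] := claim1 Px Py Pc Pd xy cd xc cx yc cy xd dx yd dy.
have yx : g y x = 1 by rewrite gC.
split.
  move=> p; split.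
    move=> Pp.
    have Nl : grade_m1 br g x y (- br x p) by apply: NN; apply: N_of_P.
    have [b [z [q [Bb [Zz [Qq lq]]]]]] := (C1 _).1 Nl.
    exists (br y b), (br y z), (br y q).
    split; first by exists b. split; first by exists z. split; first by exists q.
    by rewrite -!brDr -lq brNr (N_ad Py Px yx (g1_m1 Pp)) opprK.
  move=> [b' [z' [q' [[b [Bb ->]] [[z [Zz ->]] [[q [Qq ->]] ->]]]]]].
  rewrite -!brDr; apply: P_of_N => //.
  by apply: ND; [apply: ND|]; [case: Bb|case: Zz|case: Qq].
move=> b' z' q' [b [Bb ->]] [z [Zz ->]] [q [Qq ->]] sum.
have Nm : grade_m1 br g x y (b + z + q).
  by apply: ND; [apply: ND|]; [case: Bb|case: Zz|case: Qq].
have m0 : b + z + q = 0.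
  have ym : br y (b + z + q) = 0 by rewrite !brDr.
  by rewrite -[LHS]opprK -(N_ad Px Py xy Nm) ym br0r oppr0.
have [-> [-> ->]] := C1u _ _ _ Bb Zz Qq m0.
by rewrite br0r.
Qed.

Lemma claim3 x y c d : pure_extremal br x -> pure_extremal br y ->
  pure_extremal br c -> pure_extremal br d -> g x y = 1 -> g c d = 1 ->
  br x c = 0 -> br c x = 0 -> br y c = 0 -> br c y = 0 ->
  br x d = 0 -> br d x = 0 -> br y d = 0 -> br d y = 0 ->
  dsum3 (grade_m1 br g c d) (inter (grade_m1 br g x y) (grade_m1 br g c d))
    (inter (grade_0 br x y) (grade_m1 br g c d))
    (ad_image br y (inter (grade_m1 br g x y) (grade_m1 br g c d))).
Proof.
move=> Px Py Pc Pd xy cd xc cx yc cy xd dx yd dy.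
have yx : g y x = 1 by rewrite gC.
split; last first.
  move=> b z q [Nb _] [Zz _] [v [[Nv _] ->]] sum.
  exact: (direct Px Py xy Nb Zz (P_of_N Px Py Nv) sum).
move=> n; split; last first.
  move=> [b [z [q [[_ Nb] [[_ Nz] [[v [[_ Nv] ->]] ->]]]]]].
  by apply: ND => //; [apply: ND|apply: Nstab].
move=> Nn; have [w [_ nw]] := Nn.
have [_ gxc] := comm_g0 Px xc; have [_ gyc] := comm_g0 Py yc.
have Pq : grade_1 br g x y (- br y (br x n)) by apply: m1_g1; rewrite nw; apply: projN.
exists (- br x (br y n)), (n + br x (br y n) + br y (br x n)), (- br y (br x n)).
split; [split|split; [split|split; [|]]].
- by rewrite nw; apply: projN.
- by apply: NN; apply: Nstab => //; apply: Nstab.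
- apply: projZ => //; rewrite nw ?gxc ?gyc //.
    by rewrite (brcomm w yc) gxc.
  by rewrite (brcomm w xc) gyc.
- by apply: ND; [apply: ND|]; [|apply: Nstab => //; apply: Nstab|apply: Nstab => //; apply: Nstab].
- exists (- br x (- br y (br x n))); split; first split.
  + by apply: NN; apply: N_of_P.
  + by apply: NN; apply: Nstab => //; apply: NN; apply: Nstab => //; apply: Nstab.
  + by rewrite brNr (N_ad Py Px yx (g1_m1 Pq)) opprK.
- lin k.
Qed.

Lemma claim4 x y c d : pure_extremal br x -> pure_extremal br y ->
  pure_extremal br c -> pure_extremal br d -> g x y = 1 -> g c d = 1 ->
  br x c = 0 -> br c x = 0 -> br y c = 0 -> br c y = 0 ->
  br x d = 0 -> br d x = 0 -> br y d = 0 -> br d y = 0 ->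
  dsum3 (grade_1 br g c d) (inter (grade_m1 br g x y) (grade_1 br g c d))
    (ad_image br d (inter (grade_0 br x y) (grade_m1 br g c d)))
    (ad_image br y (inter (grade_m1 br g x y) (grade_1 br g c d))).
Proof.
move=> Px Py Pc Pd xy cd xc cx yc cy xd dx yd dy.
have yx : g y x = 1 by rewrite gC.
have dc : g d c = 1 by rewrite gC.
split; last first.
  move=> b z q [Nb _] [xi [[Zxi _] ->]] [v [[Nv _] ->]] sum.
  exact: (direct Px Py xy Nb (Zstab xd yd Zxi) (P_of_N Px Py Nv) sum).
move=> p; split; last first.
  move=> [b [z [q [[_ Pb] [[xi [[_ Nxi] ->]] [[v [[_ Pv] ->]] ->]]]]]].
  apply: m1_g1; apply: ND; [apply: ND|].
  - exact: g1_m1.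
  - exact: g1_m1 (P_of_N Pc Pd Nxi).
  - by apply: Nstab => //; apply: g1_m1.
move=> Pp; have Np := g1_m1 Pp; have [w [_ pw]] := Np.
have [_ gxd] := comm_g0 Px xd; have [_ gyd] := comm_g0 Py yd.
have Pq : grade_1 br g x y (- br y (br x p)) by apply: m1_g1; rewrite pw; apply: projN.
have Zchi : grade_0 br x y (p + br x (br y p) + br y (br x p)).
  apply: projZ => //; rewrite pw ?gxd ?gyd //.
    by rewrite (brcomm w yd) gxd.
  by rewrite (brcomm w xd) gyd.
have Nchi : grade_m1 br g d c (p + br x (br y p) + br y (br x p)).
  by apply: ND; [apply: ND|]; [|apply: Nstab => //; apply: Nstab|apply: Nstab => //; apply: Nstab].
exists (- br x (br y p)), (br d (- br c (p + br x (br y p) + br y (br x p)))),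
  (br y (- br x (- br y (br x p)))).
split; [split|split; [|split; [|]]].
- by rewrite pw; apply: projN.
- by apply: m1_g1; apply: NN; apply: Nstab => //; apply: Nstab.
- exists (- br c (p + br x (br y p) + br y (br x p))); split => //; split.
  + by apply: ZN; apply: Zstab.
  + by apply: NN; apply: N_of_P => //; apply: m1_g1.
- exists (- br x (- br y (br x p))); split => //; split.
  + by apply: NN; apply: N_of_P.
  + apply: m1_g1; apply: NN; apply: Nstab => //; apply: NN.
    by apply: Nstab => //; apply: Nstab.
- have q1 : br y (- br x (- br y (br x p))) = - br y (br x p).
    by rewrite brNr (N_ad Py Px yx (g1_m1 Pq)) opprK.
  rewrite q1 brNr (N_ad Pd Pc dc Nchi); lin k.
Qed.

Lemma main x y c d : pure_extremal br x -> pure_extremal br y ->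
  pure_extremal br c -> pure_extremal br d -> g x y = 1 -> g c d = 1 ->
  br x c = 0 -> br c x = 0 -> br y c = 0 -> br c y = 0 ->
  br x d = 0 -> br d x = 0 -> br y d = 0 -> br d y = 0 ->
  dsum3 (grade_m1 br g x y) (inter (grade_m1 br g x y) (grade_m1 br g c d))
    (inter (grade_m1 br g x y) (grade_0 br c d))
    (inter (grade_m1 br g x y) (grade_1 br g c d)) /\
  dsum3 (grade_1 br g x y)
    (ad_image br y (inter (grade_m1 br g x y) (grade_m1 br g c d)))
    (ad_image br y (inter (grade_m1 br g x y) (grade_0 br c d)))
    (ad_image br y (inter (grade_m1 br g x y) (grade_1 br g c d))) /\
  dsum3 (grade_m1 br g c d) (inter (grade_m1 br g x y) (grade_m1 br g c d))
    (inter (grade_0 br x y) (grade_m1 br g c d))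
    (ad_image br y (inter (grade_m1 br g x y) (grade_m1 br g c d))) /\
  dsum3 (grade_1 br g c d) (inter (grade_m1 br g x y) (grade_1 br g c d))
    (ad_image br d (inter (grade_0 br x y) (grade_m1 br g c d)))
    (ad_image br y (inter (grade_m1 br g x y) (grade_1 br g c d))).
Proof.
move=> *; split; first exact: claim1.
split; first exact: claim2.
split; first exact: claim3.
exact: claim4.
Qed.
End Lie.

Theorem proposition5p7 (k : fieldType) (L : lmodType k) (br : L -> L -> L)
  (g : L -> L -> k)
  (Hlie : is_lie br) (Hsimple : simple_lie br)
  (Hk : exists a : k, a != 0 /\ a != 1)
  (Hgen : generated_by_pure_extremal br)
  (Hlines : exists k' : splittingFieldType k,
     galois 1%VS (@fullv _ k') /\ (\dim (@fullv _ k') <= 2)%N /\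
     exists (M : lmodType k') (brM : M -> M -> M) (emb : L -> M),
       is_lie brM /\ is_base_change br brM emb /\ has_lines brM)
  (Hsymp : exists a b, symplectic br a b)
  (Hg : extremal_form br g)
  (x y c d : L)
  (Hx : extremal br x) (Hy : extremal br y) (Hc : extremal br c) (Hd : extremal br d)
  (Hxy : g x y = 1) (Hcd : g c d = 1)
  (Sxc : symplectic br x c) (Scy : symplectic br c y)
  (Syd : symplectic br y d) (Sdx : symplectic br d x) :
  let V  := inter (grade_m1 br g x y) (grade_m1 br g c d) in
  let X  := inter (grade_m1 br g x y) (grade_0 br c d) in
  let V' := inter (grade_m1 br g x y) (grade_1 br g c d) in
  let X' := inter (grade_0 br x y) (grade_m1 br g c d) in
  dsum3 (grade_m1 br g x y) V X V' /\
  dsum3 (grade_1 br g x y) (ad_image br y V) (ad_image br y X) (ad_image br y V') /\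
  dsum3 (grade_m1 br g c d) V X' (ad_image br y V) /\
  dsum3 (grade_1 br g c d) V' (ad_image br d X') (ad_image br y V').
Proof.
move=> V X V' X'.
have [Px [Pc [_ [xc _]]]] := Sxc.
have [_ [Py [_ [cy _]]]] := Scy.
have [_ [Pd [_ [yd _]]]] := Syd.
have [_ [_ [_ [dx _]]]] := Sdx.
have cx : br c x = 0 by rewrite (brC Hlie) xc oppr0.
have yc : br y c = 0 by rewrite (brC Hlie) cy oppr0.
have dy : br d y = 0 by rewrite (brC Hlie) yd oppr0.
have xd : br x d = 0 by rewrite (brC Hlie) dx oppr0.
exact: (@main _ _ br g Hlie Hg x y c d Px Py Pc Pd Hxy Hcd xc cx yc cy xd dx yd dy).
Qed.
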